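(* For the relativistic quantities $I_1$, $I_0$, $J_0$ defined in the context, let $\{I_i \leq 0\}$, $\{I_i \equiv 0\}$, $\{I_i \geq 0\}$ (and likewise $\{J_0 \leq 0\}$, etc.) denote the sets of all equations of state $\rho(p)$ such that, for all $p \leq p_{max}$, the respective quantity is $\leq 0$, $\equiv 0$, or $\geq 0$. Then \begin{align*} \{I_1 \leq 0\} &\subset \{I_0 \leq 0\} \subset \{J_0 \leq 0\} \\ \{I_1 \equiv 0\} &\equiv \{I_0 \equiv 0\}\equiv \{J_0 \equiv 0\}\\ \{I_1 \geq 0\} &\subset \{I_0 \geq 0\} \subset \{J_0 \geq 0\} \:. \end{align*}
   Context: General Relativity (units with $c=1$), static perfect fluids. Consider a barotropic equation of state $\rho(p)$ given on an interval $[0,p_{max}]$, piecewise ${\mathcal C}^0$ on $[0,p_{max}]$, with $\rho$ positive. Define $\Gamma(p) := \int_0^p dp^\prime\,(\rho(p^\prime)+ p^\prime)^{-1}$, and assume that $\Gamma(p)$ exists and that the limit $\lim_{p\rightarrow 0} \rho^{-1} p$ exists. Define \begin{align*} H_0(p) &:= \rho(p) + \rho(p) e^{-\Gamma(p)} + 6 p e^{-\Gamma(p)},\\ J_0(p) &:= \frac{1}{2 \rho}\, [1-e^{-\Gamma}] \,H_0(p) - 3 \rho^{-1} \int_0^p dp^\prime e^{-\Gamma(p^\prime)} \frac{1}{\rho(p^\prime)+p^\prime} H_0(p^\prime),\\ I_0(p) &:= 1 - e^{-\Gamma(p)} - 6 e^{-\Gamma(p)} \rho^{-1} p,\\ I_1(p)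 &:= 6 e^{-\Gamma} p \,\rho^{-2}\, \frac{d\rho}{dp} - 5 e^{-\Gamma} (\rho+p)^{-1}, \end{align*} where for $I_1$ the equation of state is required to be ${\mathcal C}^0[0,p_{max}]$ and piecewise ${\mathcal C}^1$. *)

(* Defs.v *)
From Stdlib Require Import Reals.
From Coquelicot Require Import Coquelicot.
Open Scope R_scope.

(* f is piecewise C^0 on [a,b]: there is a partition a = x_0 < ... < x_n = b
   such that on each open piece (x_i, x_{i+1}) f coincides with a function
   continuous on the closed piece [x_i, x_{i+1}] (i.e. f is continuous on each
   open piece with finite one-sided limits at its ends). *)
Definition piecewise_C0 (f : R -> R) (a b : R) : Prop :=
  exists (n : nat) (x : nat -> R),
    x 0%nat = a /\ x n = b /\
    (forall i, (i < n)%nat -> x i < x (S i)) /\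
    (forall i, (i < n)%nat -> exists g : R -> R,
        (forall t, x i <= t <= x (S i) -> continuous g t) /\
        (forall t, x i < t < x (S i) -> g t = f t)).

Definition piecewise_C1 (f : R -> R) (a b : R) : Prop :=
  exists (n : nat) (x : nat -> R),
    x 0%nat = a /\ x n = b /\
    (forall i, (i < n)%nat -> x i < x (S i)) /\
    (forall i, (i < n)%nat -> exists g g' : R -> R,
        (forall t, x i <= t <= x (S i) -> is_derive g t (g' t) /\ continuous g' t) /\
        (forall t, x i < t < x (S i) -> g t = f t)).

Definition C0_on (f : R -> R) (a b : R) : Prop :=
  forall t, a <= t <= b ->
    filterlim f (within (fun y => a <= y <= b) (locally t)) (locally (f t)).

Definition Gamma (rho : R -> R) (p : R) : R :=
  RInt_gen (fun q => / (rho q + q)) (at_right 0) (at_point p).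

Definition eos (rho : R -> R) (pmax : R) : Prop :=
  0 < pmax /\
  0 <= rho 0 /\
  (forall p, 0 < p <= pmax -> 0 < rho p) /\
  piecewise_C0 rho 0 pmax /\
  (forall p, 0 < p <= pmax ->
     ex_RInt_gen (fun q => / (rho q + q)) (at_right 0) (at_point p)) /\
  (exists L : R, filterlim (fun p => p / rho p) (at_right 0) (locally L)).

Definition eos1 (rho : R -> R) (pmax : R) : Prop :=
  eos rho pmax /\ C0_on rho 0 pmax /\ piecewise_C1 rho 0 pmax.

Definition H0 (rho : R -> R) (p : R) : R :=
  rho p + rho p * exp (- Gamma rho p) + 6 * p * exp (- Gamma rho p).

Definition J0 (rho : R -> R) (p : R) : R :=
  / (2 * rho p) * (1 - exp (- Gamma rho p)) * H0 rho p
  - 3 * / rho p *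
    RInt (fun q => exp (- Gamma rho q) * / (rho q + q) * H0 rho q) 0 p.

Definition I0 (rho : R -> R) (p : R) : R :=
  1 - exp (- Gamma rho p) - 6 * exp (- Gamma rho p) * / rho p * p.

(* I_1 at p, where d is the value of d rho / dp at p. *)
Definition I1 (rho : R -> R) (p d : R) : R :=
  6 * exp (- Gamma rho p) * p * / (rho p ^ 2) * d
  - 5 * exp (- Gamma rho p) * / (rho p + p).

Definition holds_on (pmax : R) (Q : R -> R) (P : R -> Prop) : Prop :=
  forall p, 0 < p <= pmax -> P (Q p).

Definition I1_holds_on (rho : R -> R) (pmax : R) (P : R -> Prop) : Prop :=
  forall p d, 0 < p < pmax -> is_derive rho p d -> P (I1 rho p d).

(* Main.v *)
Require Import Defs.
From Stdlib Require Import Reals Lra Lia.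
From Coquelicot Require Import Coquelicot.
Open Scope R_scope.


Lemma ballR (x e y : R) : ball x e y <-> Rabs (y - x) < e.
Proof. reflexivity. Qed.

Lemma locR (c : R) (P : R -> Prop) :
  locally c P <-> exists d : posreal, forall y, Rabs (y - c) < d -> P y.
Proof. reflexivity. Qed.

Lemma lim_epsR {T} {F : (T -> Prop) -> Prop} {FF : Filter F} (f : T -> R) l :
  filterlim f F (locally l) <-> forall eps : posreal, F (fun x => Rabs (f x - l) < eps).
Proof. split; intros H.
  - intros eps. exact (proj1 (filterlim_locally f l) H eps).
  - apply (proj2 (filterlim_locally f l)). exact H. Qed.

Lemma lim_plus {T} {F : (T -> Prop) -> Prop} {FF : Filter F} (f g : T -> R) a b :
  filterlim f F (locally a) -> filterlim g F (locally b) ->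
  filterlim (fun x => f x + g x) F (locally (a + b)).
Proof. intros Hf Hg. eapply filterlim_comp_2; eauto. exact (filterlim_plus a b). Qed.

Lemma lim_mult {T} {F : (T -> Prop) -> Prop} {FF : Filter F} (f g : T -> R) a b :
  filterlim f F (locally a) -> filterlim g F (locally b) ->
  filterlim (fun x => f x * g x) F (locally (a * b)).
Proof. intros Hf Hg. eapply filterlim_comp_2; eauto. exact (filterlim_mult a b). Qed.

Lemma lim_const {T} {F : (T -> Prop) -> Prop} {FF : Filter F} (a : R) :
  filterlim (fun _ : T => a) F (locally a).
Proof. apply filterlim_const. Qed.

Lemma contR (h : R -> R) a : ex_derive h a -> continuous h a.
Proof. intros H. exact (ex_derive_continuous (K:=R_AbsRing) (V:=R_NormedModule) h a H). Qed.

Lemma lim_cont {T} {F : (T -> Prop) -> Prop} (f : T -> R) (h : R -> R) a :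
  filterlim f F (locally a) -> continuous h a ->
  filterlim (fun x => h (f x)) F (locally (h a)).
Proof. intros Hf Hh. eapply filterlim_comp; eauto. Qed.

Lemma lim_opp {T} {F : (T -> Prop) -> Prop} {FF : Filter F} (f : T -> R) a :
  filterlim f F (locally a) -> filterlim (fun x => - f x) F (locally (- a)).
Proof. intros Hf. apply (lim_cont f Ropp a Hf).
  apply contR. auto_derive. auto. Qed.

Lemma lim_minus {T} {F : (T -> Prop) -> Prop} {FF : Filter F} (f g : T -> R) a b :
  filterlim f F (locally a) -> filterlim g F (locally b) ->
  filterlim (fun x => f x - g x) F (locally (a - b)).
Proof. intros. apply lim_plus; auto. apply lim_opp; auto. Qed.

Lemma lim_inv {T} {F : (T -> Prop) -> Prop} {FF : Filter F} (f : T -> R) a :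
  filterlim f F (locally a) -> a <> 0 -> filterlim (fun x => / f x) F (locally (/ a)).
Proof. intros Hf Ha. apply (lim_cont f Rinv a Hf).
  apply contR. auto_derive. auto. Qed.

Lemma lim_exp {T} {F : (T -> Prop) -> Prop} {FF : Filter F} (f : T -> R) a :
  filterlim f F (locally a) -> filterlim (fun x => exp (f x)) F (locally (exp a)).
Proof. intros Hf. apply (lim_cont f exp a Hf).
  apply contR. auto_derive. auto. Qed.

Lemma lim_id_right c : filterlim (fun x => x) (at_right c) (locally c).
Proof. intros P HP. destruct HP as [d Hd]. exists d. intros y Hy _. apply Hd; auto. Qed.
Lemma lim_id_left c : filterlim (fun x => x) (at_left c) (locally c).
Proof. intros P HP. destruct HP as [d Hd]. exists d. intros y Hy _. apply Hd; auto. Qed.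
Lemma lim_id_loc (c : R) : filterlim (fun x : R => x) (locally c) (locally c).
Proof. apply filterlim_id. Qed.

Lemma loc_to_right (f : R -> R) c L : filterlim f (locally c) L -> filterlim f (at_right c) L.
Proof. intros H P HP. specialize (H P HP). destruct H as [d Hd]. exists d. intros; apply Hd; auto. Qed.
Lemma loc_to_left (f : R -> R) c L : filterlim f (locally c) L -> filterlim f (at_left c) L.
Proof. intros H P HP. specialize (H P HP). destruct H as [d Hd]. exists d. intros; apply Hd; auto. Qed.

Lemma lim_right_ge (f : R -> R) c d v m : c < d -> filterlim f (at_right c) (locally v) ->
  (forall a, c < a < d -> m <= f a) -> m <= v.
Proof.
  intros Hcd Hl Hm. destruct (Rle_or_lt m v) as [|Hv]; auto. exfalso.
  assert (He : 0 < m - v) by lra.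
  pose proof (proj1 (lim_epsR f v) Hl (mkposreal _ He)) as Hl0; clear Hl; rename Hl0 into Hl.
  destruct Hl as [e He2]. simpl in He2.
  set (a := c + Rmin (e/2) ((d - c)/2)).
  assert (0 < Rmin (e/2) ((d-c)/2)) by (apply Rmin_pos; destruct e; simpl; lra).
  assert (Rmin (e/2) ((d-c)/2) <= e/2) by apply Rmin_l.
  assert (Rmin (e/2) ((d-c)/2) <= (d-c)/2) by apply Rmin_r.
  assert (Ha : Rabs (f a - v) < m - v).
  { apply He2. unfold ball; simpl; unfold AbsRing_ball, abs, minus, plus, opp; simpl.
    unfold a. rewrite Rabs_right; destruct e; simpl in *; lra. unfold a; lra. }
  specialize (Hm a). assert (m <= f a) by (apply Hm; unfold a; lra).
  apply Rabs_def2 in Ha. lra.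
Qed.

Lemma lim_left_ge (f : R -> R) c d v m : c < d -> filterlim f (at_left d) (locally v) ->
  (forall a, c < a < d -> m <= f a) -> m <= v.
Proof.
  intros Hcd Hl Hm. destruct (Rle_or_lt m v) as [|Hv]; auto. exfalso.
  assert (He : 0 < m - v) by lra.
  pose proof (proj1 (lim_epsR f v) Hl (mkposreal _ He)) as Hl0; clear Hl; rename Hl0 into Hl.
  destruct Hl as [e He2]. simpl in He2.
  set (a := d - Rmin (e/2) ((d - c)/2)).
  assert (0 < Rmin (e/2) ((d-c)/2)) by (apply Rmin_pos; destruct e; simpl; lra).
  assert (Rmin (e/2) ((d-c)/2) <= e/2) by apply Rmin_l.
  assert (Rmin (e/2) ((d-c)/2) <= (d-c)/2) by apply Rmin_r.
  assert (Ha : Rabs (f a - v) < m - v).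
  { apply He2. unfold ball; simpl; unfold AbsRing_ball, abs, minus, plus, opp; simpl.
    unfold a. rewrite Rabs_left1; destruct e; simpl in *; lra. unfold a; lra. }
  specialize (Hm a). assert (m <= f a) by (apply Hm; unfold a; lra).
  apply Rabs_def2 in Ha. lra.
Qed.

Lemma lim_right_le (f : R -> R) c d v m : c < d -> filterlim f (at_right c) (locally v) ->
  (forall a, c < a < d -> f a <= m) -> v <= m.
Proof. intros. assert (- m <= - v); [|lra].
  apply (lim_right_ge (fun x => - f x) c d); auto. apply lim_opp; auto.
  intros a Ha; specialize (H1 a Ha); lra. Qed.
Lemma lim_left_le (f : R -> R) c d v m : c < d -> filterlim f (at_left d) (locally v) ->
  (forall a, c < a < d -> f a <= m) -> v <= m.
Proof. intros. assert (- m <= - v); [|lra].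
  apply (lim_left_ge (fun x => - f x) c d); auto. apply lim_opp; auto.
  intros a Ha; specialize (H1 a Ha); lra. Qed.

Lemma exR_Ch1 (f : R -> R) a b c : a <= b <= c -> ex_RInt f a c -> ex_RInt f a b.
Proof. intros H1 H2. exact (ex_RInt_Chasles_1 (V:=R_CompleteNormedModule) f a b c H1 H2). Qed.
Lemma exR_Ch2 (f : R -> R) a b c : a <= b <= c -> ex_RInt f a c -> ex_RInt f b c.
Proof. intros H1 H2. exact (ex_RInt_Chasles_2 (V:=R_CompleteNormedModule) f a b c H1 H2). Qed.
Lemma RInt_ChR (f : R -> R) a b c : ex_RInt f a b -> ex_RInt f b c -> RInt f a b + RInt f b c = RInt f a c.
Proof. intros H1 H2. exact (RInt_Chasles (V:=R_CompleteNormedModule) f a b c H1 H2). Qed.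
Lemma RInt_ptR (f : R -> R) a : RInt f a a = 0.
Proof. exact (RInt_point (V:=R_CompleteNormedModule) a f). Qed.
Lemma RInt_correctR (f : R -> R) a b : ex_RInt f a b -> is_RInt f a b (RInt f a b).
Proof. intros H. exact (RInt_correct (V:=R_CompleteNormedModule) f a b H). Qed.
Lemma is_RInt_uniqueR (f : R -> R) a b l : is_RInt f a b l -> RInt f a b = l.
Proof. intros H. exact (is_RInt_unique (V:=R_CompleteNormedModule) f a b l H). Qed.

Lemma ev_right (c d : R) (P : R -> Prop) : c < d -> (forall y, c < y < d -> P y) -> at_right c P.
Proof. intros Hcd H. assert (Hp : 0 < d - c) by lra. exists (mkposreal _ Hp).
  intros y Hy Hcy. assert (Hy' : Rabs (y - c) < d - c) by exact Hy.
  apply Rabs_def2 in Hy'. apply H; lra. Qed.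
Lemma ev_left (c d : R) (P : R -> Prop) : c < d -> (forall y, c < y < d -> P y) -> at_left d P.
Proof. intros Hcd H. assert (Hp : 0 < d - c) by lra. exists (mkposreal _ Hp).
  intros y Hy Hcy. assert (Hy' : Rabs (y - d) < d - c) by exact Hy.
  apply Rabs_def2 in Hy'. apply H; lra. Qed.
Lemma ev_loc (c d e : R) (P : R -> Prop) : c < e < d -> (forall y, c < y < d -> P y) -> locally e P.
Proof. intros Hcd H. assert (Hp : 0 < Rmin (e - c) (d - e)) by (apply Rmin_pos; lra).
  exists (mkposreal _ Hp).
  intros y Hy. assert (Hy' : Rabs (y - e) < Rmin (e - c) (d - e)) by exact Hy.
  pose proof (Rmin_l (e - c) (d - e)). pose proof (Rmin_r (e - c) (d - e)).
  apply Rabs_def2 in Hy'. apply H; lra. Qed.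

Lemma within_to_right (f : R -> R) a b c L : a <= c < b ->
  filterlim f (within (fun y => a <= y <= b) (locally c)) L -> filterlim f (at_right c) L.
Proof. intros Hc H P HP. specialize (H P HP). destruct H as [d Hd].
  assert (Hm : 0 < Rmin d (b - c)) by (apply Rmin_pos; [destruct d; simpl; lra|lra]).
  exists (mkposreal _ Hm). intros y Hy Hcy. assert (Hy' : Rabs (y - c) < Rmin d (b - c)) by exact Hy.
  pose proof (Rmin_l d (b - c)). pose proof (Rmin_r d (b - c)).
  apply Hd. apply ballR. lra. apply Rabs_def2 in Hy'. lra. Qed.
Lemma within_to_left (f : R -> R) a b c L : a < c <= b ->
  filterlim f (within (fun y => a <= y <= b) (locally c)) L -> filterlim f (at_left c) L.
Proof. intros Hc H P HP. specialize (H P HP). destruct H as [d Hd].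
  assert (Hm : 0 < Rmin d (c - a)) by (apply Rmin_pos; [destruct d; simpl; lra|lra]).
  exists (mkposreal _ Hm). intros y Hy Hcy. assert (Hy' : Rabs (y - c) < Rmin d (c - a)) by exact Hy.
  pose proof (Rmin_l d (c - a)). pose proof (Rmin_r d (c - a)).
  apply Hd. apply ballR. lra. apply Rabs_def2 in Hy'. lra. Qed.

Lemma lip_lims (f : R -> R) a b K : 0 <= K ->
  (forall s t, a <= s <= t -> t <= b -> Rabs (f t - f s) <= K * (t - s)) ->
  (forall c, a < c <= b -> filterlim f (at_left c) (locally (f c))) /\
  (forall c, a <= c < b -> filterlim f (at_right c) (locally (f c))) /\
  (forall c, a < c < b -> continuous f c).
Proof.
  intros HK Hl.
  assert (Main : forall c, a <= c <= b -> forall eps : posreal, exists d : posreal,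
            forall y, a <= y <= b -> Rabs (y - c) < d -> Rabs (f y - f c) < eps).
  { intros c Hc eps. assert (Hd : 0 < eps / (K + 1)) by (apply Rdiv_lt_0_compat; destruct eps; simpl; lra).
    exists (mkposreal _ Hd). intros y Hy Hyc. simpl in Hyc.
    assert (Hb : Rabs (f y - f c) <= K * Rabs (y - c)).
    { destruct (Rle_or_lt c y).
      - rewrite (Rabs_right (y - c)) by lra. apply Hl; lra.
      - rewrite Rabs_minus_sym. rewrite (Rabs_left (y - c)) by lra.
        replace (- (y - c)) with (c - y) by ring. apply Hl; lra. }
    assert (K * Rabs (y - c) <= K * (eps / (K + 1))) by (apply Rmult_le_compat_l; lra).
    assert (K * (eps / (K + 1)) < eps).
    { destruct eps as [e He]; simpl in *. apply (Rmult_lt_reg_r (K + 1)); [lra|].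
      field_simplify; lra. }
    lra. }
  split; [|split].
  - intros c Hc. apply (proj2 (lim_epsR f (f c))). intros eps.
    destruct (Main c ltac:(lra) eps) as [d Hd].
    assert (Hm : 0 < Rmin d (c - a)) by (apply Rmin_pos; [destruct d; simpl; lra|lra]).
    exists (mkposreal _ Hm). intros y Hy Hyc. assert (Hy' : Rabs (y - c) < Rmin d (c - a)) by exact Hy.
    pose proof (Rmin_l d (c - a)). pose proof (Rmin_r d (c - a)).
    apply Hd; [|lra]. apply Rabs_def2 in Hy'. lra.
  - intros c Hc. apply (proj2 (lim_epsR f (f c))). intros eps.
    destruct (Main c ltac:(lra) eps) as [d Hd].
    assert (Hm : 0 < Rmin d (b - c)) by (apply Rmin_pos; [destruct d; simpl; lra|lra]).
    exists (mkposreal _ Hm). intros y Hy Hyc. assert (Hy' : Rabs (y - c) < Rmin d (b - c)) by exact Hy.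
    pose proof (Rmin_l d (b - c)). pose proof (Rmin_r d (b - c)).
    apply Hd; [|lra]. apply Rabs_def2 in Hy'. lra.
  - intros c Hc. unfold continuous. apply (proj2 (lim_epsR f (f c))). intros eps.
    destruct (Main c ltac:(lra) eps) as [d Hd].
    assert (Hm : 0 < Rmin d (Rmin (c - a) (b - c))) by
      (apply Rmin_pos; [destruct d; simpl; lra|apply Rmin_pos; lra]).
    exists (mkposreal _ Hm). intros y Hy. assert (Hy' : Rabs (y - c) < Rmin d (Rmin (c - a) (b - c))) by exact Hy.
    pose proof (Rmin_l d (Rmin (c - a) (b - c))). pose proof (Rmin_r d (Rmin (c - a) (b - c))).
    pose proof (Rmin_l (c - a) (b - c)). pose proof (Rmin_r (c - a) (b - c)).
    apply Hd; [|lra]. apply Rabs_def2 in Hy'. lra.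
Qed.

Lemma derR_const (c x : R) : is_derive (fun _ : R => c) x 0.
Proof. auto_derive; auto. Qed.
Lemma derR_eq (f : R -> R) x l l' : is_derive f x l -> l = l' -> is_derive f x l'.
Proof. intros H E; subst; auto. Qed.

Lemma mono_open (P : R -> R) a b :
  (forall t, a < t < b -> exists d, is_derive P t d /\ 0 <= d) ->
  forall s t, a < s -> s < t -> t < b -> P s <= P t.
Proof.
  intros Hd s t Hs Hst Htb.
  destruct (MVT_gen P s t (Derive P)) as [c [Hc Heq]].
  - intros y Hy. rewrite Rmin_left in Hy by lra. rewrite Rmax_right in Hy by lra.
    destruct (Hd y ltac:(lra)) as [d [Hd1 _]].
    rewrite (is_derive_unique _ _ _ Hd1). exact Hd1.
  - intros y Hy. rewrite Rmin_left in Hy by lra. rewrite Rmax_right in Hy by lra.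
    apply continuity_pt_filterlim. apply contR.
    destruct (Hd y ltac:(lra)) as [d [Hd1 _]]. exists d; exact Hd1.
  - rewrite Rmin_left in Hc by lra. rewrite Rmax_right in Hc by lra.
    destruct (Hd c ltac:(lra)) as [d [Hd1 Hd2]].
    rewrite (is_derive_unique _ _ _ Hd1) in Heq.
    assert (0 <= d * (t - s)) by (apply Rmult_le_pos; lra). lra.
Qed.

Lemma mono_piece (P : R -> R) a b va vb : a < b ->
  (forall t, a < t < b -> exists d, is_derive P t d /\ 0 <= d) ->
  filterlim P (at_right a) (locally va) ->
  filterlim P (at_left b) (locally vb) ->
  (forall t, a < t < b -> va <= P t /\ P t <= vb) /\ va <= vb.
Proof.
  intros Hab Hd Hr Hl.
  assert (H1 : forall t, a < t < b -> va <= P t /\ P t <= vb).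
  { intros t Ht. split.
    - apply (lim_right_le P a t va (P t)); try lra; auto.
      intros s Hs. apply (mono_open P a b Hd); lra.
    - apply (lim_left_ge P t b vb (P t)); try lra; auto.
      intros s Hs. apply (mono_open P a b Hd); lra. }
  split; auto. destruct (H1 ((a+b)/2) ltac:(lra)). lra.
Qed.

Lemma incr_seq (n : nat) (x : nat -> R) :
  (forall i, (i < n)%nat -> x i < x (S i)) ->
  forall k, (k <= n)%nat -> x 0%nat <= x k /\ ((0 < k)%nat -> x 0%nat < x k).
Proof.
  intros Hinc k. induction k as [|k IH]; intros Hk.
  - split; [lra| intros; lia].
  - destruct IH as [IH1 IH2]; [lia|]. specialize (Hinc k ltac:(lia)). split; [lra|]. intros; lra.
Qed.

Lemma pw_mono (n : nat) (x : nat -> R) (P : R -> R) (v0 : R) :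
  (forall i, (i < n)%nat -> x i < x (S i)) ->
  (forall i, (i < n)%nat -> forall t, x i < t < x (S i) -> exists d, is_derive P t d /\ 0 <= d) ->
  filterlim P (at_right (x 0%nat)) (locally v0) ->
  (forall i, (0 < i < n)%nat -> filterlim P (at_right (x i)) (locally (P (x i)))) ->
  (forall i, (i < n)%nat -> filterlim P (at_left (x (S i))) (locally (P (x (S i))))) ->
  forall t, x 0%nat < t <= x n -> v0 <= P t.
Proof.
  intros Hinc Hd H0 Hr Hl.
  assert (K : forall k, (k <= n)%nat -> forall t, x 0%nat < t <= x k -> v0 <= P t).
  { intros k. induction k as [|k IH]; intros Hk t Ht.
    - lra.
    - destruct (Rle_or_lt t (x k)) as [Htk|Htk].
      + apply IH; [lia|lra].
      + assert (Hva : exists va, v0 <= va /\ filterlim P (at_right (x k)) (locally va)).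
        { destruct k as [|k'].
          - exists v0. split; [lra|auto].
          - exists (P (x (S k'))). split.
            + apply IH; [lia|]. split; [|lra].
              destruct (incr_seq n x Hinc (S k') ltac:(lia)) as [_ Hh]. apply Hh; lia.
            + apply Hr; lia. }
        destruct Hva as [va [Hva1 Hva2]].
        destruct (mono_piece P (x k) (x (S k)) va (P (x (S k))) (Hinc k ltac:(lia))
           (Hd k ltac:(lia)) Hva2 (Hl k ltac:(lia))) as [M1 M2].
        destruct (Req_dec t (x (S k))) as [E|E].
        * rewrite E. lra.
        * destruct (M1 t ltac:(lra)). lra. }
  intros t Ht. apply (K n); auto.
Qed.

Lemma ex_RInt_pw (f : R -> R) (a b la lb : R) : a < b ->
  (forall t, a < t < b -> continuous f t) ->
  filterlim f (at_right a) (locally la) ->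
  filterlim f (at_left b) (locally lb) ->
  ex_RInt f a b.
Proof.
  intros Hab Hc Hr Hl.
  set (H := fun t : R => if Rle_dec t a then la else if Rle_dec b t then lb else f t).
  assert (HC : forall z, a <= z <= b -> continuous H z).
  { intros z Hz.
    destruct (Req_dec z a) as [Ea|Ea].
    - subst z. unfold continuous. apply (proj2 (lim_epsR H (H a))).
      intros eps. pose proof (proj1 (lim_epsR f la) Hr eps) as [d Hd].
      assert (Hm : 0 < Rmin d (b - a)) by (apply Rmin_pos; [destruct d; simpl; lra| lra]).
      exists (mkposreal _ Hm). intros y Hy0. assert (Hy : Rabs (y - a) < Rmin d (b-a)) by exact Hy0.
      pose proof (Rmin_l d (b-a)). pose proof (Rmin_r d (b-a)).
      unfold H. destruct (Rle_dec a a) as [_|N]; [|lra].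
      destruct (Rle_dec y a).
      + rewrite Rminus_diag, Rabs_R0. destruct eps; simpl; lra.
      + destruct (Rle_dec b y).
        * exfalso. apply Rabs_def2 in Hy. lra.
        * apply Hd. apply ballR. lra. lra.
    - destruct (Req_dec z b) as [Eb|Eb].
      + subst z. unfold continuous. apply (proj2 (lim_epsR H (H b))).
        intros eps. pose proof (proj1 (lim_epsR f lb) Hl eps) as [d Hd].
        assert (Hm : 0 < Rmin d (b - a)) by (apply Rmin_pos; [destruct d; simpl; lra| lra]).
        exists (mkposreal _ Hm). intros y Hy0. assert (Hy : Rabs (y - b) < Rmin d (b-a)) by exact Hy0.
        pose proof (Rmin_l d (b-a)). pose proof (Rmin_r d (b-a)).
        unfold H. destruct (Rle_dec b a) as [N|_]; [lra|]. destruct (Rle_dec b b) as [_|N]; [|lra].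
        destruct (Rle_dec y a).
        * exfalso. apply Rabs_def2 in Hy. lra.
        * destruct (Rle_dec b y).
          -- rewrite Rminus_diag, Rabs_R0. destruct eps; simpl; lra.
          -- apply Hd. apply ballR. lra. lra.
      + assert (Hz' : a < z < b) by lra.
        apply (continuous_ext_loc H f z).
        * assert (Hm : 0 < Rmin (z - a) (b - z)) by (apply Rmin_pos; lra).
          exists (mkposreal _ Hm). intros y Hy0. assert (Hy : Rabs (y - z) < Rmin (z-a) (b-z)) by exact Hy0.
          pose proof (Rmin_l (z-a) (b-z)). pose proof (Rmin_r (z-a) (b-z)).
          apply Rabs_def2 in Hy. unfold H.
          destruct (Rle_dec y a); [lra|]. destruct (Rle_dec b y); [lra|]. reflexivity.
        * apply Hc; auto. }
  assert (HE : ex_RInt H a b).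
  { apply (ex_RInt_continuous (V:=R_CompleteNormedModule)). intros z Hz.
    rewrite Rmin_left in Hz by lra. rewrite Rmax_right in Hz by lra. auto. }
  destruct HE as [l Hl0]. exists l. apply (is_RInt_ext H); auto.
  intros y Hy. rewrite Rmin_left in Hy by lra. rewrite Rmax_right in Hy by lra.
  unfold H. destruct (Rle_dec y a); [lra|]. destruct (Rle_dec b y); [lra|]. reflexivity.
Qed.

Lemma ex_RInt_pieces (f : R -> R) (n : nat) (x : nat -> R) :
  (forall i, (i < n)%nat -> x i < x (S i)) ->
  (forall i, (i < n)%nat -> ex_RInt f (x i) (x (S i))) ->
  forall p, x 0%nat <= p <= x n -> ex_RInt f (x 0%nat) p.
Proof.
  intros Hinc Hp.
  assert (K : forall k, (k <= n)%nat -> forall p, x 0%nat <= p <= x k -> ex_RInt f (x 0%nat) p).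
  { intros k. induction k as [|k IH]; intros Hk p Hpk.
    - replace p with (x 0%nat) by lra. apply ex_RInt_point.
    - destruct (Rle_or_lt p (x k)) as [Hpk'|Hpk'].
      + apply IH; [lia|lra].
      + apply ex_RInt_Chasles with (x k).
        * apply IH; [lia|]. destruct (incr_seq n x Hinc k ltac:(lia)). lra.
        * apply exR_Ch1 with (x (S k)); [lra|]. apply Hp; lia. }
  intros p Hp'. apply (K n); auto.
Qed.

Notation W rho := (fun q => / (rho q + q)).

Lemma eos_pos rho pmax : eos rho pmax -> forall p, 0 < p <= pmax -> 0 < rho p.
Proof. intros (_ & _ & H & _). auto. Qed.

Lemma W_bound rho pmax : eos rho pmax -> forall q, 0 < q <= pmax ->
  0 < / (rho q + q) /\ / (rho q + q) <= / q.
Proof. intros E q Hq. pose proof (eos_pos rho pmax E q Hq). split.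
  - apply Rinv_0_lt_compat; lra.
  - apply Rinv_le_contravar; lra. Qed.

Lemma gen_ex (f : R -> R) b : ex_RInt_gen f (at_right 0) (at_point b) ->
  exists d, 0 < d /\ forall a, 0 < a < d -> ex_RInt f a b.
Proof.
  intros [l Hl]. assert (Ht := Hl (fun _ => True) ltac:(exists (mkposreal 1 Rlt_0_1); auto)).
  destruct Ht as [Q R HQ HR Hqr]. destruct HQ as [d Hd].
  exists d. split; [destruct d; simpl; lra|]. intros a Ha.
  destruct (Hqr a b) as [y [Hy _]].
  - apply Hd; [|lra]. apply ballR. rewrite Rminus_0_r, Rabs_right by lra. lra.
  - exact HR.
  - exists y. exact Hy.
Qed.

Lemma G_ex rho pmax : eos rho pmax -> forall a b, 0 < a -> a <= b -> b <= pmax ->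
  ex_RInt (W rho) a b.
Proof.
  intros E a b Ha Hab Hb. destruct E as (_ & _ & _ & _ & Hint & _).
  destruct (gen_ex _ b (Hint b ltac:(lra))) as [d [Hd Hd2]].
  set (a0 := Rmin (d/2) a).
  assert (0 < a0) by (apply Rmin_pos; lra).
  assert (a0 <= d/2) by apply Rmin_l. assert (a0 <= a) by apply Rmin_r.
  apply exR_Ch2 with a0; [lra|]. apply Hd2. lra.
Qed.

Lemma gen_lim (f : R -> R) b l : is_RInt_gen f (at_right 0) (at_point b) l ->
  filterlim (fun a => RInt f a b) (at_right 0) (locally l).
Proof.
  intros Hl P HP. specialize (Hl P HP). destruct Hl as [Q R HQ HR Hqr].
  unfold filtermap. apply (filter_imp Q); [|exact HQ]. intros a Ha.
  destruct (Hqr a b Ha HR) as [y [Hy Py]]. simpl in Hy. rewrite (is_RInt_uniqueR _ _ _ _ Hy). exact Py.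
Qed.

Lemma G_correct rho pmax : eos rho pmax -> forall p, 0 < p <= pmax ->
  is_RInt_gen (W rho) (at_right 0) (at_point p) (Gamma rho p).
Proof.
  intros E p Hp. destruct E as (_ & _ & _ & _ & Hint & _).
  unfold Gamma. apply (RInt_gen_correct (V:=R_CompleteNormedModule)). apply Hint; auto.
Qed.

Lemma G_split rho pmax : eos rho pmax -> forall a b, 0 < a <= pmax -> 0 < b <= pmax ->
  Gamma rho b = Gamma rho a + RInt (W rho) a b.
Proof.
  intros E a b Ha Hb.
  assert (H1 := G_correct rho pmax E a Ha).
  assert (H2 : is_RInt_gen (W rho) (at_point a) (at_point b) (RInt (W rho) a b)).
  { apply (is_RInt_gen_at_point (V:=R_NormedModule)). apply RInt_correctR.
    destruct (Rle_or_lt a b).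
    - apply (G_ex rho pmax E); lra.
    - apply ex_RInt_swap. apply (G_ex rho pmax E); lra. }
  assert (H3 := @is_RInt_gen_Chasles R_NormedModule _ _ _ _ (W rho) a _ _ H1 H2).
  unfold Gamma at 1. apply (is_RInt_gen_unique (V:=R_CompleteNormedModule)). exact H3.
Qed.

Lemma G_lim0 rho pmax : eos rho pmax -> filterlim (Gamma rho) (at_right 0) (locally 0).
Proof.
  intros E. assert (Hp : 0 < pmax) by (destruct E; auto).
  assert (H := gen_lim _ _ _ (G_correct rho pmax E pmax ltac:(lra))).
  apply (filterlim_ext_loc (fun a => Gamma rho pmax - RInt (W rho) a pmax)).
  - apply (ev_right 0 pmax); auto. intros y Hy.
    rewrite (G_split rho pmax E y pmax) by lra. ring.
  - assert (L := lim_minus (F:=at_right 0) _ _ _ _ (lim_const (Gamma rho pmax)) H).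
    rewrite Rminus_diag in L. exact L.
Qed.

Lemma G_nonneg rho pmax : eos rho pmax -> forall p, 0 < p <= pmax -> 0 <= Gamma rho p.
Proof.
  intros E p Hp. assert (H := gen_lim _ _ _ (G_correct rho pmax E p Hp)).
  apply (lim_right_ge (fun a => RInt (W rho) a p) 0 p (Gamma rho p) 0); [lra|exact H|].
  intros a Ha. apply RInt_ge_0; [lra| apply (G_ex rho pmax E); lra|].
  intros x Hx. destruct (W_bound rho pmax E x ltac:(lra)). lra.
Qed.

Lemma G_lip rho pmax : eos rho pmax -> forall a s t, 0 < a -> a <= s <= t -> t <= pmax ->
  Rabs (Gamma rho t - Gamma rho s) <= / a * (t - s).
Proof.
  intros E a s t Ha Hs Ht.
  rewrite (G_split rho pmax E s t) by lra.
  rewrite Rplus_comm. unfold Rminus. rewrite Rplus_assoc, Rplus_opp_r, Rplus_0_r.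
  rewrite Rmult_comm. apply abs_RInt_le_const; [lra| apply (G_ex rho pmax E); lra|].
  intros q Hq. destruct (W_bound rho pmax E q ltac:(lra)).
  rewrite Rabs_right by lra. apply Rle_trans with (/ q); auto. apply Rinv_le_contravar; lra.
Qed.

Lemma G_lims rho pmax : eos rho pmax ->
  (forall c, 0 < c <= pmax -> filterlim (Gamma rho) (at_left c) (locally (Gamma rho c))) /\
  (forall c, 0 < c < pmax -> filterlim (Gamma rho) (at_right c) (locally (Gamma rho c))) /\
  (forall c, 0 < c < pmax -> continuous (Gamma rho) c).
Proof.
  intros E. split; [|split]; intros c Hc.
  - destruct (lip_lims (Gamma rho) (c/2) pmax (/ (c/2))) as [H1 _].
    + left. apply Rinv_0_lt_compat. lra.
    + intros s t Hs Ht. apply (G_lip rho pmax E); lra.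
    + apply H1. lra.
  - destruct (lip_lims (Gamma rho) (c/2) pmax (/ (c/2))) as [_ [H1 _]].
    + left. apply Rinv_0_lt_compat. lra.
    + intros s t Hs Ht. apply (G_lip rho pmax E); lra.
    + apply H1. lra.
  - destruct (lip_lims (Gamma rho) (c/2) pmax (/ (c/2))) as [_ [_ H1]].
    + left. apply Rinv_0_lt_compat. lra.
    + intros s t Hs Ht. apply (G_lip rho pmax E); lra.
    + apply H1. lra.
Qed.

Lemma G_deriv rho pmax : eos rho pmax -> forall t, 0 < t < pmax -> continuous rho t ->
  is_derive (Gamma rho) t (/ (rho t + t)).
Proof.
  intros E t Ht Hc.
  assert (Hr : 0 < rho t) by (apply (eos_pos rho pmax E); lra).
  assert (HD : is_derive (fun b => RInt (W rho) (t/2) b) t (/ (rho t + t))).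
  { apply (is_derive_RInt (V:=R_NormedModule) (W rho) _ (t/2) t).
    - apply (ev_loc (t/2) pmax t); [lra|]. intros y Hy. apply RInt_correctR.
      apply (G_ex rho pmax E); lra.
    - unfold continuous. apply lim_inv; [|lra]. apply lim_plus; auto. apply lim_id_loc. }
  apply (is_derive_ext_loc (fun b => Gamma rho (t/2) + RInt (W rho) (t/2) b)).
  - apply (ev_loc (t/2) pmax t); [lra|]. intros y Hy. symmetry. apply (G_split rho pmax E); lra.
  - replace (/ (rho t + t)) with (0 + / (rho t + t)) by ring.
    apply (is_derive_plus (K:=R_AbsRing) (V:=R_NormedModule)); auto. apply derR_const.
Qed.

Lemma lim_eqv {T} {F : (T -> Prop) -> Prop} (f : T -> R) (a b : R) :
  filterlim f F (locally a) -> a = b -> filterlim f F (locally b).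
Proof. intros H E; subst; auto. Qed.

Lemma RInt_inv_c (c a b : R) : 0 < a <= b -> RInt (fun q => c / q) a b = c * (ln b - ln a).
Proof.
  intros H. apply is_RInt_uniqueR.
  assert (Hd := is_RInt_derive (V:=R_CompleteNormedModule) (fun q => c * ln q) (fun q => c / q) a b).
  replace (c * (ln b - ln a)) with (minus (c * ln b) (c * ln a)).
  2:{ unfold minus, plus, opp; simpl. ring. }
  apply Hd.
  - intros x Hx. rewrite Rmin_left in Hx by lra. rewrite Rmax_right in Hx by lra.
    auto_derive; [lra|]. field. lra.
  - intros x Hx. rewrite Rmin_left in Hx by lra. rewrite Rmax_right in Hx by lra.
    apply contR. auto_derive. lra.
Qed.

Lemma L_zero rho pmax : eos rho pmax ->
  filterlim (fun p => p / rho p) (at_right 0) (locally 0).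
Proof.
  intros E. pose proof E as (Hp & _ & Hpos & _ & _ & [L HL]).
  assert (HL0 : 0 <= L).
  { apply (lim_right_ge (fun p => p / rho p) 0 pmax L 0); auto.
    intros a Ha. assert (0 < rho a) by (apply Hpos; lra).
    apply Rlt_le, Rdiv_lt_0_compat; lra. }
  destruct HL0 as [HLp|HL0]; [exfalso|subst L; exact HL].
  assert (He : 0 < L / 2) by lra.
  destruct (proj1 (lim_epsR _ L) HL (mkposreal _ He)) as [d Hd]. simpl in Hd.
  set (b := Rmin (d/2) pmax).
  assert (Hb0 : 0 < b) by (apply Rmin_pos; destruct d; simpl; lra).
  assert (Hb1 : b <= d/2) by apply Rmin_l. assert (Hb2 : b <= pmax) by apply Rmin_r.
  set (c := L / (2 + L)). assert (Hc : 0 < c) by (apply Rdiv_lt_0_compat; lra).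
  assert (Key : forall a, 0 < a < b -> c * (ln b - ln a) <= Gamma rho b).
  { intros a Ha.
    rewrite (G_split rho pmax E a b) by lra.
    assert (0 <= Gamma rho a) by (apply (G_nonneg rho pmax E); lra).
    assert (c * (ln b - ln a) <= RInt (W rho) a b); [|lra].
    rewrite <- RInt_inv_c by lra.
    apply RInt_le; [lra| |apply (G_ex rho pmax E); lra|].
    - apply (ex_RInt_continuous (V:=R_CompleteNormedModule)). intros z Hz.
      rewrite Rmin_left in Hz by lra. rewrite Rmax_right in Hz by lra.
      apply contR. auto_derive. lra.
    - intros q Hq. assert (Hr : 0 < rho q) by (apply Hpos; lra).
      assert (Hq2 : Rabs (q / rho q - L) < L / 2).
      { apply Hd; [|lra]. apply ballR. rewrite Rminus_0_r, Rabs_right by lra.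
        destruct d; simpl in *; lra. }
      apply Rabs_def2 in Hq2. destruct Hq2 as [_ Hq2].
      assert (Hq3 : L * rho q < 2 * q).
      { assert (Hqq : q = (q / rho q) * rho q) by (field; lra). nra. }
      assert (Hcq : c * (rho q + q) <= q).
      { unfold c. apply (Rmult_le_reg_r (2 + L)); [lra|].
        replace (L / (2 + L) * (rho q + q) * (2 + L)) with (L * (rho q + q)) by (field; lra). nra. }
      apply Rle_trans with (q * / q * / (rho q + q)).
      + replace (c / q) with ((c * (rho q + q)) * / q * / (rho q + q)) by (field; lra).
        apply Rmult_le_compat_r; [left; apply Rinv_0_lt_compat; lra|].
        apply Rmult_le_compat_r; [left; apply Rinv_0_lt_compat; lra|]. exact Hcq.
      + right. field. lra. }
  set (a := b * exp (- (Gamma rho b / c) - 1)).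
  assert (Hg : 0 <= Gamma rho b) by (apply (G_nonneg rho pmax E); lra).
  assert (Hx : exp (- (Gamma rho b / c) - 1) < 1).
  { apply Rlt_le_trans with (exp 0); [|rewrite exp_0; lra]. apply exp_increasing.
    assert (0 <= Gamma rho b / c) by (apply Rdiv_le_0_compat; lra). lra. }
  assert (Hx0 : 0 < exp (- (Gamma rho b / c) - 1)) by apply exp_pos.
  assert (Ha : 0 < a < b) by (unfold a; split; nra).
  specialize (Key a Ha). unfold a in Key. rewrite ln_mult, ln_exp in Key by lra.
  replace (c * (ln b - (ln b + (- (Gamma rho b / c) - 1)))) with (Gamma rho b + c) in Key
    by (field; lra). lra.
Qed.

Lemma rw_lim rho pmax : eos rho pmax ->
  filterlim (fun q => rho q * / (rho q + q)) (at_right 0) (locally 1).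
Proof.
  intros E. assert (Hp : 0 < pmax) by (destruct E; auto).
  apply (filterlim_ext_loc (fun q => / (1 + q / rho q))).
  - apply (ev_right 0 pmax); auto. intros y Hy.
    assert (0 < rho y) by (apply (eos_pos rho pmax E); lra). field. lra.
  - apply (lim_eqv _ (/ (1 + 0))); [|rewrite Rplus_0_r; apply Rinv_1].
    apply lim_inv; [|lra]. apply lim_plus. apply lim_const. apply (L_zero rho pmax E).
Qed.

Lemma qw_lim rho pmax : eos rho pmax ->
  filterlim (fun q => q * / (rho q + q)) (at_right 0) (locally 0).
Proof.
  intros E. assert (Hp : 0 < pmax) by (destruct E; auto).
  apply (filterlim_ext_loc (fun q => (q / rho q) * / (1 + q / rho q))).
  - apply (ev_right 0 pmax); auto. intros y Hy.
    assert (0 < rho y) by (apply (eos_pos rho pmax E); lra). field. lra.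
  - apply (lim_eqv _ (0 * / (1 + 0))); [|ring].
    apply lim_mult. apply (L_zero rho pmax E).
    apply lim_inv; [|lra]. apply lim_plus. apply lim_const. apply (L_zero rho pmax E).
Qed.

Lemma u_lim0 rho pmax : eos rho pmax ->
  filterlim (fun q => exp (- Gamma rho q)) (at_right 0) (locally 1).
Proof.
  intros E. apply (lim_eqv _ (exp (- 0))); [|rewrite Ropp_0; apply exp_0].
  apply lim_exp. apply lim_opp.
  apply (G_lim0 rho pmax E).
Qed.

Lemma I0_lim0 rho pmax : eos rho pmax ->
  filterlim (I0 rho) (at_right 0) (locally 0).
Proof.
  intros E. assert (Hp : 0 < pmax) by (destruct E; auto).
  apply (filterlim_ext_loc (fun q => 1 - exp (- Gamma rho q) - 6 * exp (- Gamma rho q) * (q / rho q))).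
  - apply (ev_right 0 pmax); auto. intros y Hy. unfold I0, Rdiv. ring.
  - apply (lim_eqv _ (1 - 1 - 6 * 1 * 0)); [|ring].
    apply lim_minus. apply lim_minus. apply lim_const. apply (u_lim0 rho pmax E).
    apply lim_mult. apply lim_mult. apply lim_const. apply (u_lim0 rho pmax E).
    apply (L_zero rho pmax E).
Qed.

Lemma I0_deriv rho pmax : eos rho pmax -> forall t d, 0 < t < pmax -> is_derive rho t d ->
  is_derive (I0 rho) t (I1 rho t d).
Proof.
  intros E t d Ht Hd.
  assert (Hr : 0 < rho t) by (apply (eos_pos rho pmax E); lra).
  assert (Hc : continuous rho t) by (apply contR; exists d; exact Hd).
  assert (HG := G_deriv rho pmax E t Ht Hc).
  unfold I0, I1. auto_derive.
  - repeat split; try (exists (/ (rho t + t)); exact HG); try (exists d; exact Hd). lra.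
  - replace (Derive (fun x => Gamma rho x) t) with (/ (rho t + t))
      by (symmetry; apply is_derive_unique; exact HG).
    replace (Derive (fun x => rho x) t) with d
      by (symmetry; apply is_derive_unique; exact Hd).
    field. lra.
Qed.

Lemma I0_lim_gen rho c (F : (R -> Prop) -> Prop) {FF : Filter F} :
  filterlim rho F (locally (rho c)) -> filterlim (Gamma rho) F (locally (Gamma rho c)) ->
  filterlim (fun x => x) F (locally c) -> rho c <> 0 ->
  filterlim (I0 rho) F (locally (I0 rho c)).
Proof.
  intros Hr HG Hi Hc. unfold I0.
  apply lim_minus. apply lim_minus. apply lim_const.
  apply lim_exp, lim_opp; auto.
  apply lim_mult; auto. apply lim_mult. apply lim_mult. apply lim_const.
  apply lim_exp, lim_opp; auto. apply lim_inv; auto.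
Qed.

Lemma derR_scal (f : R -> R) x l s : is_derive f x l -> is_derive (fun t => s * f t) x (s * l).
Proof. intros H. auto_derive. exists l; auto.
  replace (Derive (fun x0 => f x0) x) with l by (symmetry; apply is_derive_unique; exact H). ring. Qed.

Lemma sc_lim {T} (F : (T -> Prop) -> Prop) {FF : Filter F} (f : T -> R) s a :
  filterlim f F (locally a) -> filterlim (fun t => s * f t) F (locally (s * a)).
Proof. intros H. apply lim_mult; auto. apply lim_const. Qed.

Lemma part1_sign rho pmax (s : R) : eos1 rho pmax ->
  I1_holds_on rho pmax (fun v => 0 <= s * v) ->
  holds_on pmax (I0 rho) (fun v => 0 <= s * v).
Proof.
  intros [E [HC0 HC1]] HI p Hp.
  destruct HC1 as [n [x [Hx0 [Hxn [Hinc Hg]]]]].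
  assert (Hpm : 0 < pmax) by (destruct E; auto).
  assert (Xb : forall i, (i <= n)%nat -> 0 <= x i <= pmax).
  { intros i Hi. destruct (incr_seq n x Hinc i Hi). destruct (incr_seq n x Hinc n (le_n n)).
    split; [lra|]. clear H0 H2.
    induction n as [|m IH]. - assert (i = 0%nat) by lia. subst. lra.
    -
      assert (Hm : forall j k, (j <= k <= S m)%nat -> x j <= x k).
      { intros j k Hjk. induction k as [|k IHk].
        - assert (j = 0%nat) by lia. subst. lra.
        - destruct (Nat.eq_dec j (S k)) as [->|Hne]; [lra|].
          specialize (IHk ltac:(lia)). specialize (Hinc k ltac:(lia)). lra. }
      rewrite <- Hxn. apply Hm. lia. }
  assert (Hpos : forall t, 0 < t <= pmax -> 0 < rho t) by (apply (eos_pos rho pmax E)).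
  destruct (G_lims rho pmax E) as [GL [GR GC]].
  apply (pw_mono n x (fun t => s * I0 rho t) 0 Hinc).
  - intros i Hi t Ht. destruct (Hg i Hi) as [g [g' [Hgd Hge]]].
    pose proof (Xb i ltac:(lia)). pose proof (Xb (S i) ltac:(lia)).
    assert (Hrd : is_derive rho t (g' t)).
    { apply (is_derive_ext_loc g). apply (ev_loc (x i) (x (S i)) t); [lra|].
      intros y Hy. apply Hge; lra. apply Hgd; lra. }
    exists (s * I1 rho t (g' t)). split.
    + apply derR_scal.
      apply (I0_deriv rho pmax E); auto. lra.
    + apply HI; [lra|exact Hrd].
  - rewrite Hx0. apply (lim_eqv _ (s * 0)); [|ring]. apply sc_lim. apply _.
    apply (I0_lim0 rho pmax E).
  - intros i Hi. pose proof (Xb i ltac:(lia)). pose proof (incr_seq n x Hinc i ltac:(lia)) as [_ Hx].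
    specialize (Hx ltac:(lia)). rewrite Hx0 in Hx. pose proof (incr_seq n x Hinc n (le_n n)) as [_ Hxn'].
    assert (Hin : x i < pmax).
    { pose proof (Hinc i ltac:(lia)). pose proof (Xb (S i) ltac:(lia)). lra. }
    apply sc_lim. apply _. apply I0_lim_gen. apply _.
    + apply (within_to_right rho 0 pmax); [lra|]. apply HC0. lra.
    + apply GR. lra.
    + apply lim_id_right.
    + assert (0 < rho (x i)) by (apply Hpos; lra). lra.
  - intros i Hi. pose proof (Xb (S i) ltac:(lia)). pose proof (Xb i ltac:(lia)).
    pose proof (Hinc i Hi).
    apply sc_lim. apply _. apply I0_lim_gen. apply _.
    + apply (within_to_left rho 0 pmax); [lra|]. apply HC0. lra.
    + apply GL. lra.
    + apply lim_id_left.
    + assert (0 < rho (x (S i))) by (apply Hpos; lra). lra.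
  - rewrite Hx0, Hxn. exact Hp.
Qed.

Definition kk (rho : R -> R) := fun q => exp (- Gamma rho q) * / (rho q + q) * H0 rho q.

Lemma u_le1 x : 0 <= x -> exp (- x) <= 1.
Proof. intros H. destruct (Req_dec x 0) as [->|N].
  - rewrite Ropp_0, exp_0; lra.
  - left. rewrite <- exp_0. apply exp_increasing. lra. Qed.

Lemma k_bound rho pmax : eos rho pmax -> forall q, 0 < q <= pmax -> Rabs (kk rho q) <= 8.
Proof.
  intros E q Hq. assert (Hr : 0 < rho q) by (apply (eos_pos rho pmax E); lra).
  assert (Hu1 : exp (- Gamma rho q) <= 1) by (apply u_le1, (G_nonneg rho pmax E); lra).
  assert (Hu0 : 0 < exp (- Gamma rho q)) by apply exp_pos.
  set (u := exp (- Gamma rho q)) in *.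
  set (rw := rho q * / (rho q + q)). set (qw := q * / (rho q + q)).
  assert (Hrw : 0 < rw) by (unfold rw; apply Rmult_lt_0_compat; [lra| apply Rinv_0_lt_compat; lra]).
  assert (Hqw : 0 < qw) by (unfold qw; apply Rmult_lt_0_compat; [lra| apply Rinv_0_lt_compat; lra]).
  assert (Hs : rw + qw = 1) by (unfold rw, qw; field; lra).
  assert (Hk : kk rho q = u * (1 + u) * rw + 6 * (u * u) * qw).
  { unfold kk, H0, rw, qw, u. field. lra. }
  rewrite Hk. rewrite Rabs_right by nra.
  assert (u * (1 + u) <= 2) by nra. assert (u * u <= 1) by nra. nra.
Qed.

Lemma k_lim_gen rho (F : (R -> Prop) -> Prop) {FF : Filter F} r g c :
  filterlim rho F (locally r) -> filterlim (Gamma rho) F (locally g) ->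
  filterlim (fun x => x) F (locally c) -> r + c <> 0 ->
  filterlim (kk rho) F (locally (exp (- g) * / (r + c) * (r + r * exp (- g) + 6 * c * exp (- g)))).
Proof.
  intros Hr HG Hi Hc. unfold kk, H0.
  apply lim_mult. apply lim_mult. apply lim_exp, lim_opp; auto.
  apply lim_inv; auto. apply lim_plus; auto.
  apply lim_plus. apply lim_plus; auto. apply lim_mult; auto. apply lim_exp, lim_opp; auto.
  apply lim_mult. apply lim_mult; auto. apply lim_const. apply lim_exp, lim_opp; auto.
Qed.

Lemma k_cont rho pmax : eos rho pmax -> forall t, 0 < t < pmax -> continuous rho t ->
  continuous (kk rho) t.
Proof.
  intros E t Ht Hc. destruct (G_lims rho pmax E) as [_ [_ GC]].
  assert (0 < rho t) by (apply (eos_pos rho pmax E); lra).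
  unfold continuous. apply (k_lim_gen rho (locally t) (rho t) (Gamma rho t) t);
    [exact Hc | apply GC; lra | apply lim_id_loc | lra].
Qed.

Lemma k_lim0 rho pmax : eos rho pmax -> filterlim (kk rho) (at_right 0) (locally 2).
Proof.
  intros E. assert (Hp : 0 < pmax) by (destruct E; auto).
  apply (filterlim_ext_loc (fun q => exp (- Gamma rho q) * (1 + exp (- Gamma rho q)) * (rho q * / (rho q + q))
     + 6 * (exp (- Gamma rho q) * exp (- Gamma rho q)) * (q * / (rho q + q)))).
  - apply (ev_right 0 pmax); auto. intros y Hy.
    assert (0 < rho y) by (apply (eos_pos rho pmax E); lra). unfold kk, H0. field. lra.
  - apply (lim_eqv _ (1 * (1 + 1) * 1 + 6 * (1 * 1) * 0)); [|ring].
    pose proof (u_lim0 rho pmax E). pose proof (rw_lim rho pmax E). pose proof (qw_lim rho pmax E).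
    apply lim_plus; apply lim_mult; auto; apply lim_mult; auto; try apply lim_const.
    apply lim_plus; auto. apply lim_const. apply lim_mult; auto.
Qed.

Lemma C0_pieces rho pmax : eos rho pmax -> exists n (x : nat -> R),
  x 0%nat = 0 /\ x n = pmax /\ (forall i, (i < n)%nat -> x i < x (S i)) /\
  (forall i, (i <= n)%nat -> 0 <= x i <= pmax) /\
  (forall i, (i < n)%nat -> exists g : R -> R,
        (forall t, x i <= t <= x (S i) -> continuous g t) /\
        (forall t, x i < t < x (S i) -> g t = rho t)).
Proof.
  intros E. pose proof E as (Hpm & _ & _ & [n [x [Hx0 [Hxn [Hinc Hg]]]]] & _).
  exists n, x. repeat split; auto.
  - destruct (incr_seq n x Hinc i H). lra.
  - assert (Hm : forall j k, (j <= k <= n)%nat -> x j <= x k).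
    { intros j k Hjk. induction k as [|k IHk].
      - assert (j = 0%nat) by lia. subst. lra.
      - destruct (Nat.eq_dec j (S k)) as [->|Hne]; [lra|].
        specialize (IHk ltac:(lia)). specialize (Hinc k ltac:(lia)). lra. }
    rewrite <- Hxn. apply Hm. lia.
Qed.

Lemma piece_rho_lims rho pmax (g : R -> R) a b : eos rho pmax -> 0 <= a -> a < b -> b <= pmax ->
  (forall t, a <= t <= b -> continuous g t) -> (forall t, a < t < b -> g t = rho t) ->
  (forall t, a < t < b -> continuous rho t) /\
  filterlim rho (at_right a) (locally (g a)) /\ 0 <= g a /\
  filterlim rho (at_left b) (locally (g b)) /\ 0 <= g b.
Proof.
  intros E Ha Hab Hb Hc He.
  assert (Hpos : forall t, a < t < b -> 0 < rho t) by (intros; apply (eos_pos rho pmax E); lra).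
  assert (R1 : filterlim rho (at_right a) (locally (g a))).
  { apply (filterlim_ext_loc g). apply (ev_right a b); auto.
    apply loc_to_right. apply Hc. lra. }
  assert (R2 : filterlim rho (at_left b) (locally (g b))).
  { apply (filterlim_ext_loc g). apply (ev_left a b); auto.
    apply loc_to_left. apply Hc. lra. }
  repeat split; auto.
  - intros t Ht. apply (continuous_ext_loc _ g). apply (ev_loc a b t); auto.
    apply Hc; lra.
  - apply (lim_right_ge rho a b (g a) 0); auto. intros t Ht. left; apply Hpos; auto.
  - apply (lim_left_ge rho a b (g b) 0); auto. intros t Ht. left; apply Hpos; auto.
Qed.

Lemma k_int rho pmax : eos rho pmax -> forall p, 0 <= p <= pmax -> ex_RInt (kk rho) 0 p.
Proof.
  intros E p Hp.
  destruct (C0_pieces rho pmax E) as [n [x [Hx0 [Hxn [Hinc [Xb Hg]]]]]].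
  destruct (G_lims rho pmax E) as [GL [GR GC]].
  rewrite <- Hx0. apply (ex_RInt_pieces _ n x Hinc); [|lra].
  intros i Hi. destruct (Hg i Hi) as [g [Hgc Hge]].
  pose proof (Xb i ltac:(lia)). pose proof (Xb (S i) ltac:(lia)). pose proof (Hinc i Hi).
  destruct (piece_rho_lims rho pmax g (x i) (x (S i)) E) as [C [R1 [R1p [R2 R2p]]]]; try lra; auto.
  destruct (Req_dec (x i) 0) as [Z|Z].
  - eapply (ex_RInt_pw _ _ _ 2); [lra| | |].
    + intros t Ht. apply (k_cont rho pmax E); auto. lra.
    + rewrite Z. apply (k_lim0 rho pmax E).
    + apply (k_lim_gen rho _ (g (x (S i))) (Gamma rho (x (S i))) (x (S i)));
        [exact R2 | apply GL; lra | apply lim_id_left | lra].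
  - eapply (ex_RInt_pw _ _ _); [lra| | |].
    + intros t Ht. apply (k_cont rho pmax E); auto. lra.
    + apply (k_lim_gen rho _ (g (x i)) (Gamma rho (x i)) (x i));
        [exact R1 | apply GR; lra | apply lim_id_right | lra].
    + apply (k_lim_gen rho _ (g (x (S i))) (Gamma rho (x (S i))) (x (S i)));
        [exact R2 | apply GL; lra | apply lim_id_left | lra].
Qed.

Definition Rk rho p := RInt (kk rho) 0 p.
Definition Phi rho p := Rk rho p - 2 * p * exp (- Gamma rho p).

Lemma Rk_lip rho pmax : eos rho pmax -> forall s t, 0 <= s <= t -> t <= pmax ->
  Rabs (Rk rho t - Rk rho s) <= (8 + Rabs (kk rho 0)) * (t - s).
Proof.
  intros E s t Hs Ht. unfold Rk.
  assert (H1 := k_int rho pmax E t ltac:(lra)).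
  assert (H2 : ex_RInt (kk rho) 0 s) by (apply exR_Ch1 with t; auto; lra).
  assert (H3 : ex_RInt (kk rho) s t) by (apply exR_Ch2 with 0; auto; lra).
  rewrite <- (RInt_ChR _ 0 s t H2 H3).
  rewrite Rplus_comm. unfold Rminus. rewrite Rplus_assoc, Rplus_opp_r, Rplus_0_r.
  rewrite Rmult_comm. apply abs_RInt_le_const; auto; [lra|].
  intros q Hq. destruct (Req_dec q 0) as [->|N].
  - pose proof (Rabs_pos (kk rho 0)). lra.
  - pose proof (k_bound rho pmax E q ltac:(lra)). pose proof (Rabs_pos (kk rho 0)). lra.
Qed.

Lemma Phi_lims rho pmax : eos rho pmax ->
  (forall c, 0 < c <= pmax -> filterlim (Phi rho) (at_left c) (locally (Phi rho c))) /\
  (forall c, 0 < c < pmax -> filterlim (Phi rho) (at_right c) (locally (Phi rho c))) /\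
  filterlim (Phi rho) (at_right 0) (locally 0).
Proof.
  intros E. assert (Hpm : 0 < pmax) by (destruct E; auto).
  destruct (lip_lims (Rk rho) 0 pmax (8 + Rabs (kk rho 0))) as [RL [RR _]].
  { pose proof (Rabs_pos (kk rho 0)). lra. }
  { intros s t Hs Ht. apply (Rk_lip rho pmax E); lra. }
  destruct (G_lims rho pmax E) as [GL [GR _]].
  split; [|split].
  - intros c Hc. unfold Phi. apply lim_minus. apply RL; lra.
    apply lim_mult. apply lim_mult. apply lim_const. apply lim_id_left.
    apply lim_exp, lim_opp. apply GL; lra.
  - intros c Hc. unfold Phi. apply lim_minus. apply RR; lra.
    apply lim_mult. apply lim_mult. apply lim_const. apply lim_id_right.
    apply lim_exp, lim_opp. apply GR; lra.
  - apply (lim_eqv _ (Rk rho 0 - 2 * 0 * 1)).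
    + unfold Phi. apply lim_minus. apply RR; lra.
      apply lim_mult. apply lim_mult. apply lim_const. apply lim_id_right.
      apply (u_lim0 rho pmax E).
    + unfold Rk. rewrite RInt_ptR. ring.
Qed.

Lemma Phi_deriv rho pmax : eos rho pmax -> forall t, 0 < t < pmax -> continuous rho t ->
  is_derive (Phi rho) t (- (exp (- Gamma rho t) * / (rho t + t) * rho t) * I0 rho t).
Proof.
  intros E t Ht Hc.
  assert (Hr : 0 < rho t) by (apply (eos_pos rho pmax E); lra).
  assert (HG := G_deriv rho pmax E t Ht Hc).
  assert (HR : is_derive (Rk rho) t (kk rho t)).
  { apply (is_derive_RInt (V:=R_NormedModule) (kk rho) (Rk rho) 0 t).
    - apply (ev_loc 0 pmax t); [lra|]. intros y Hy. apply RInt_correctR.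
      apply (k_int rho pmax E); lra.
    - apply (k_cont rho pmax E); auto. }
  unfold Phi. auto_derive.
  - repeat split; try (exists (kk rho t); exact HR); exists (/ (rho t + t)); exact HG.
  - replace (Derive (fun x => Gamma rho x) t) with (/ (rho t + t))
      by (symmetry; apply is_derive_unique; exact HG).
    replace (Derive (fun x => Rk rho x) t) with (kk rho t)
      by (symmetry; apply is_derive_unique; exact HR).
    unfold kk, H0, I0. field. lra.
Qed.

Lemma J0_id rho pmax : eos rho pmax -> forall p, 0 < p <= pmax ->
  J0 rho p = (1 + exp (- Gamma rho p)) / 2 * I0 rho p - 3 * Phi rho p / rho p.
Proof.
  intros E p Hp. assert (Hr : 0 < rho p) by (apply (eos_pos rho pmax E); lra).
  unfold J0, Phi, Rk, kk, I0, H0. field. lra.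
Qed.

Lemma cpos rho pmax : eos rho pmax -> forall t, 0 < t <= pmax ->
  0 < exp (- Gamma rho t) * / (rho t + t) * rho t.
Proof. intros E t Ht. assert (0 < rho t) by (apply (eos_pos rho pmax E); lra).
  apply Rmult_lt_0_compat; [apply Rmult_lt_0_compat; [apply exp_pos| apply Rinv_0_lt_compat; lra]|lra].
Qed.

Lemma part2_mono rho pmax (P : R -> R) : eos rho pmax ->
  (forall t, 0 < t < pmax -> continuous rho t -> exists d, is_derive P t d /\ 0 <= d) ->
  (forall c, 0 < c <= pmax -> filterlim P (at_left c) (locally (P c))) ->
  (forall c, 0 < c < pmax -> filterlim P (at_right c) (locally (P c))) ->
  filterlim P (at_right 0) (locally 0) ->
  forall p, 0 < p <= pmax -> 0 <= P p.
Proof.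
  intros E Hd HL HR H0 p Hp.
  destruct (C0_pieces rho pmax E) as [n [x [Hx0 [Hxn [Hinc [Xb Hg]]]]]].
  apply (pw_mono n x P 0 Hinc).
  - intros i Hi t Ht. destruct (Hg i Hi) as [g [Hgc Hge]].
    pose proof (Xb i ltac:(lia)). pose proof (Xb (S i) ltac:(lia)). pose proof (Hinc i Hi).
    destruct (piece_rho_lims rho pmax g (x i) (x (S i)) E) as [C _]; try lra; auto.
    apply Hd; [lra|]. apply C; lra.
  - rewrite Hx0. exact H0.
  - intros i Hi. pose proof (Xb i ltac:(lia)). pose proof (incr_seq n x Hinc i ltac:(lia)) as [_ Hx].
    specialize (Hx ltac:(lia)). rewrite Hx0 in Hx.
    pose proof (Hinc i ltac:(lia)). pose proof (Xb (S i) ltac:(lia)). apply HR. lra.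
  - intros i Hi. pose proof (Xb (S i) ltac:(lia)). pose proof (Xb i ltac:(lia)).
    pose proof (Hinc i Hi). apply HL. lra.
  - rewrite Hx0, Hxn. exact Hp.
Qed.

Lemma part2_sign rho pmax (s : R) : eos rho pmax ->
  holds_on pmax (I0 rho) (fun v => 0 <= s * v) ->
  holds_on pmax (J0 rho) (fun v => 0 <= s * v).
Proof.
  intros E HI p Hp.
  destruct (Phi_lims rho pmax E) as [PL [PR P0]].
  assert (HP : 0 <= - s * Phi rho p).
  { apply (part2_mono rho pmax (fun t => - s * Phi rho t) E).
    - intros t Ht Hc. exists (- s * (- (exp (- Gamma rho t) * / (rho t + t) * rho t) * I0 rho t)).
      split. apply derR_scal. apply (Phi_deriv rho pmax E); auto.
      pose proof (cpos rho pmax E t ltac:(lra)). pose proof (HI t ltac:(lra)). simpl in *. nra.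
    - intros c Hc. apply sc_lim. apply _. auto.
    - intros c Hc. apply sc_lim. apply _. auto.
    - apply (lim_eqv _ (- s * 0)); [|ring]. apply sc_lim. apply _. auto.
    - auto. }
  rewrite (J0_id rho pmax E p Hp).
  assert (Hr : 0 < rho p) by (apply (eos_pos rho pmax E); lra).
  pose proof (exp_pos (- Gamma rho p)). pose proof (HI p Hp). simpl in *.
  replace (s * ((1 + exp (- Gamma rho p)) / 2 * I0 rho p - 3 * Phi rho p / rho p))
    with ((1 + exp (- Gamma rho p)) / 2 * (s * I0 rho p) + 3 * (- s * Phi rho p) * / rho p)
    by (field; lra).
  assert (0 <= 3 * (- s * Phi rho p) * / rho p).
  { apply Rmult_le_pos; [lra| left; apply Rinv_0_lt_compat; lra]. }
  assert (0 <= (1 + exp (- Gamma rho p)) / 2 * (s * I0 rho p)) by (apply Rmult_le_pos; lra).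
  lra.
Qed.

Lemma part2_zero rho pmax : eos rho pmax ->
  holds_on pmax (J0 rho) (fun v => v = 0) -> holds_on pmax (I0 rho) (fun v => v = 0).
Proof.
  intros E HJ p Hp.
  destruct (Phi_lims rho pmax E) as [PL [PR P0]].
  assert (HI : forall t, 0 < t <= pmax ->
             I0 rho t = 6 * Phi rho t / ((1 + exp (- Gamma rho t)) * rho t)).
  { intros t Ht. pose proof (HJ t Ht). simpl in H. rewrite (J0_id rho pmax E t Ht) in H.
    assert (0 < rho t) by (apply (eos_pos rho pmax E); lra). pose proof (exp_pos (- Gamma rho t)).
    apply (Rmult_eq_reg_l ((1 + exp (- Gamma rho t)) / 2)); [|lra].
    replace ((1 + exp (- Gamma rho t)) / 2 * I0 rho t) with (3 * Phi rho t / rho t) by lra.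
    field. lra. }
  assert (HP : 0 <= - (Phi rho p * Phi rho p)).
  { apply (part2_mono rho pmax (fun t => - (Phi rho t * Phi rho t)) E).
    - intros t Ht Hc.
      set (c := exp (- Gamma rho t) * / (rho t + t) * rho t).
      assert (HD := Phi_deriv rho pmax E t Ht Hc). fold c in HD.
      exists (2 * c * Phi rho t * I0 rho t). split.
      + auto_derive; [ now (repeat split; try (exists (- c * I0 rho t); exact HD)) | ].
        replace (Derive (fun x => Phi rho x) t) with (- c * I0 rho t)
          by (symmetry; apply is_derive_unique; exact HD). ring.
      + rewrite (HI t ltac:(lra)).
        pose proof (cpos rho pmax E t ltac:(lra)). fold c in H.
        assert (0 < rho t) by (apply (eos_pos rho pmax E); lra). pose proof (exp_pos (- Gamma rho t)).
        replace (2 * c * Phi rho t * (6 * Phi rho t / ((1 + exp (- Gamma rho t)) * rho t)))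
          with (12 * c * (Phi rho t * Phi rho t) * / ((1 + exp (- Gamma rho t)) * rho t)) by (field; lra).
        apply Rmult_le_pos; [| left; apply Rinv_0_lt_compat; nra].
        apply Rmult_le_pos; [lra|]. nra.
    - intros c Hc. apply lim_opp, lim_mult; auto.
    - intros c Hc. apply lim_opp, lim_mult; auto.
    - apply (lim_eqv _ (- (0 * 0))); [|ring]. apply lim_opp, lim_mult; auto.
    - auto. }
  assert (Phi rho p = 0) by nra. simpl. rewrite (HI p Hp), H. unfold Rdiv. ring.
Qed.

Lemma part1_zero_conv rho pmax : eos1 rho pmax ->
  holds_on pmax (I0 rho) (fun v => v = 0) -> I1_holds_on rho pmax (fun v => v = 0).
Proof.
  intros [E _] HI p d Hp Hd. simpl.
  assert (H1 := I0_deriv rho pmax E p d Hp Hd).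
  assert (H2 : is_derive (I0 rho) p 0).
  { apply (is_derive_ext_loc (fun _ => 0)). apply (ev_loc 0 pmax p).
    - destruct E; lra.
    - intros y Hy. symmetry. apply HI. destruct E; lra.
    - apply derR_const. }
  rewrite <- (is_derive_unique _ _ _ H1). apply is_derive_unique. exact H2.
Qed.
Theorem proposition4 :
  (* {I1 <= 0} ⊂ {I0 <= 0} ⊂ {J0 <= 0} *)
  (forall (rho : R -> R) (pmax : R), eos1 rho pmax ->
     I1_holds_on rho pmax (fun v => v <= 0) -> holds_on pmax (I0 rho) (fun v => v <= 0)) /\
  (forall (rho : R -> R) (pmax : R), eos rho pmax ->
     holds_on pmax (I0 rho) (fun v => v <= 0) -> holds_on pmax (J0 rho) (fun v => v <= 0)) /\
  (* {I1 ≡ 0} = {I0 ≡ 0} = {J0 ≡ 0} *)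
  (forall (rho : R -> R) (pmax : R), eos1 rho pmax ->
     (I1_holds_on rho pmax (fun v => v = 0) <-> holds_on pmax (I0 rho) (fun v => v = 0))) /\
  (forall (rho : R -> R) (pmax : R), eos rho pmax ->
     (holds_on pmax (I0 rho) (fun v => v = 0) <-> holds_on pmax (J0 rho) (fun v => v = 0))) /\
  (* {I1 >= 0} ⊂ {I0 >= 0} ⊂ {J0 >= 0} *)
  (forall (rho : R -> R) (pmax : R), eos1 rho pmax ->
     I1_holds_on rho pmax (fun v => v >= 0) -> holds_on pmax (I0 rho) (fun v => v >= 0)) /\
  (forall (rho : R -> R) (pmax : R), eos rho pmax ->
     holds_on pmax (I0 rho) (fun v => v >= 0) -> holds_on pmax (J0 rho) (fun v => v >= 0)).
Proof.
  split; [|split; [|split; [|split; [|split]]]].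
  - intros rho pmax E H p Hp. simpl.
    assert (K := part1_sign rho pmax (-1) E).
    assert (K2 : 0 <= -1 * I0 rho p); [|lra].
    apply K; auto. intros q d Hq Hd. specialize (H q d Hq Hd). simpl in *. lra.
  - intros rho pmax E H p Hp. simpl.
    assert (K := part2_sign rho pmax (-1) E).
    assert (K2 : 0 <= -1 * J0 rho p); [|lra].
    apply K; auto. intros q Hq. specialize (H q Hq). simpl in *. lra.
  - intros rho pmax E. split.
    + intros H p Hp. simpl.
      assert (K1 : 0 <= 1 * I0 rho p).
      { apply (part1_sign rho pmax 1 E); auto. intros q d Hq Hd. specialize (H q d Hq Hd). simpl in *. lra. }
      assert (K2 : 0 <= -1 * I0 rho p).
      { apply (part1_sign rho pmax (-1) E); auto. intros q d Hq Hd. specialize (H q d Hq Hd). simpl in *. lra. }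
      lra.
    + apply part1_zero_conv; auto.
  - intros rho pmax E. split.
    + intros H p Hp. simpl.
      assert (K1 : 0 <= 1 * J0 rho p).
      { apply (part2_sign rho pmax 1 E); auto. intros q Hq. specialize (H q Hq). simpl in *. lra. }
      assert (K2 : 0 <= -1 * J0 rho p).
      { apply (part2_sign rho pmax (-1) E); auto. intros q Hq. specialize (H q Hq). simpl in *. lra. }
      lra.
    + apply part2_zero; auto.
  - intros rho pmax E H p Hp. simpl.
    assert (K2 : 0 <= 1 * I0 rho p); [|lra].
    apply (part1_sign rho pmax 1 E); auto. intros q d Hq Hd. specialize (H q d Hq Hd). simpl in *. lra.
  - intros rho pmax E H p Hp. simpl.
    assert (K2 : 0 <= 1 * J0 rho p); [|lra].
    apply (part2_sign rho pmax 1 E); auto. intros q Hq. specialize (H q Hq). simpl in *. lra.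
Qed.
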